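(* Let $r\ge2$, $n\ge2r$, and let $H\subseteq\binom{\Omega_n}{r}$ be $M_1^{(r)}$-saturated. Then: (1) every vertex of $\Omega_n$ lies in some edge of $H$ (so $\lambda(v_i),\rho(v_i)$ are defined for all $i$); (2) for all $i$, $\lambda(v_i)\notin[v_{i-r+2},v_{i+r-1}]$ and $\rho(v_i)\notin[v_{i-r+1},v_{i+r-2}]$; (3) for all $i$, $\rho(v_i)\in(v_i,\lambda(v_i)]$, i.e. going clockwise from $v_i$ one reaches $\rho(v_i)$ no later than $\lambda(v_i)$ (possibly $\rho(v_i)=\lambda(v_i)$), and both differ from $v_i$; (4) for all $i$, if $v_j\in[\rho(v_i),\lambda(v_i)]$ then every $e\in\binom{\Omega_n}{r}$ with $\{v_i,v_j\}\subseteq e$ belongs to $H$.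
   Context: $\Omega_n=\{v_0,\dots,v_{n-1}\}$ with cyclic order $v_0<\dots<v_{n-1}<v_0$, indices mod $n$. For distinct vertices $u,w$, $(u,w)$ is the set of vertices strictly between $u$ and $w$ moving clockwise from $u$ to $w$; $[u,w]=(u,w)\cup\{u,w\}$, $(u,w]=(u,w)\cup\{w\}$, $[u,w)=(u,w)\cup\{u\}$. An $r$-cgh $H\subseteq\binom{\Omega_n}{r}$ is $M_1^{(r)}$-saturated if there are no edges $h_1,h_2\in H$ and vertices $u\neq u'$ with $h_1\subseteq[u,u']$ and $h_2\cap[u,u']=\emptyset$, but for every $e\in\binom{\Omega_n}{r}\setminus H$ such a pair exists in $H\cup\{e\}$. For a vertex $v_i$ lying in some edge of $H$: $\lambda(v_i)$ is the vertex $u$ such that some $h\in H$ with $v_i\in h$ satisfies $h\subseteq[u,v_i]$, while no $h\in H$ with $v_i\in h$ satisfies $h\subseteq[u',v_i]$ where $u'$ is the clockwise successor of $u$ (i.e. $[u,v_i]$ is the shortest counterclockwise-ending arc at $v_i$ containing an edge through $v_i$). Symmetrically, $\rho(v_i)$ is the vertex $u$ such that some $h\in H$ with $v_i\in h$ satisfies $h\subseteq[v_i,u]$ but no such edge lies in $[v_i,u'']$ with $u''$ the clockwise predecessor of $u$. *)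

(* Defs.v *)
(* Vertices of Omega_n are the ordinals 'I_n (v_i = i). *)
From mathcomp Require Import all_boot.
Set Implicit Arguments. Unset Strict Implicit. Unset Printing Implicit Defensive.

Section Cyclic.
Variable n : nat.

(* clockwise distance from u to x : (x - u) mod n *)
Definition cdist (u x : 'I_n) : nat := (x + n - u) %% n.

(* closed arc [u,w] : vertices met going clockwise from u to w *)
Definition carc (u w : 'I_n) : {set 'I_n} := [set x | cdist u x <= cdist u w].
Definition oarc (u w : 'I_n) : {set 'I_n} :=
  [set x | 0 < cdist u x < cdist u w].
Definition ocarc (u w : 'I_n) : {set 'I_n} :=
  [set x | 0 < cdist u x <= cdist u w].

Lemma ord_pos (i : 'I_n) : 0 < n.
Proof. exact: leq_ltn_trans (leq0n i) (ltn_ord i). Qed.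

(* v_{i+k} and v_{i-k} (indices mod n) *)
Definition vadd (i : 'I_n) (k : nat) : 'I_n :=
  Ordinal (ltn_pmod (i + k) (ord_pos i)).
Definition vsub (i : 'I_n) (k : nat) : 'I_n := vadd i (n - k %% n).

Definition vsucc (u : 'I_n) : 'I_n := vadd u 1.
Definition vpred (u : 'I_n) : 'I_n := vsub u 1.

Definition uniform (r : nat) (H : {set {set 'I_n}}) : Prop :=
  forall h, h \in H -> #|h| = r.

(* H contains a copy of M_1^(r) *)
Definition has_M1 (H : {set {set 'I_n}}) : Prop :=
  exists h1 h2 u u', [/\ h1 \in H, h2 \in H, u != u',
                         h1 \subset carc u u' & h2 :&: carc u u' = set0].

Definition M1_saturated (r : nat) (H : {set {set 'I_n}}) : Prop :=
  uniform r H /\ ~ has_M1 H /\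
  forall e : {set 'I_n}, #|e| = r -> e \notin H -> has_M1 (e |: H).

Definition is_lambda (H : {set {set 'I_n}}) (v u : 'I_n) : Prop :=
  (exists2 h, h \in H & (v \in h) && (h \subset carc u v)) /\
  ~ (exists2 h, h \in H & (v \in h) && (h \subset carc (vsucc u) v)).

Definition is_rho (H : {set {set 'I_n}}) (v u : 'I_n) : Prop :=
  (exists2 h, h \in H & (v \in h) && (h \subset carc v u)) /\
  ~ (exists2 h, h \in H & (v \in h) && (h \subset carc v (vpred u))).

End Cyclic.

(* Main.v *)
Require Import Defs.
From mathcomp Require Import all_boot zify.
Set Implicit Arguments. Unset Strict Implicit. Unset Printing Implicit Defensive.

Section Arith.
Variable n : nat.

Lemma modn_lt2 m : m < 2 * n -> m %% n = if m < n then m else m - n.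
Proof.
move=> hm; case: ifP => h; first by rewrite modn_small.
move/negbT: h => h.
have e : m = (m - n) + n by lia.
rewrite {1}e modnDr modn_small //; lia.
Qed.

Lemma cdistE (x y : 'I_n) : cdist x y = if x <= y then y - x else y + n - x.
Proof.
rewrite /cdist modn_lt2; last by have := ltn_ord x; have := ltn_ord y; lia.
have := ltn_ord x; have := ltn_ord y.
by do 2 case: ifP; lia.
Qed.

Lemma carc_pos (v a c t : 'I_n) : t \in carc a c <->
  (cdist v a <= cdist v c /\ cdist v a <= cdist v t <= cdist v c) \/
  (cdist v c < cdist v a /\ (cdist v a <= cdist v t \/ cdist v t <= cdist v c)).
Proof.
rewrite /carc inE !cdistE.
have := ltn_ord v; have := ltn_ord a; have := ltn_ord c; have := ltn_ord t.
split; do ! case: ifP; lia.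
Qed.

Lemma P_lt (v x : 'I_n) : cdist v x < n.
Proof. rewrite cdistE; have := ltn_ord v; have := ltn_ord x; case: ifP; lia. Qed.

Lemma P_inj (v : 'I_n) : injective (cdist v).
Proof.
move=> x y; rewrite !cdistE => h; apply/val_inj => /=.
move: h; have := ltn_ord v; have := ltn_ord x; have := ltn_ord y.
do ! case: ifP; lia.
Qed.

Lemma P_eq0 (v x : 'I_n) : (cdist v x == 0) = (x == v).
Proof.
rewrite cdistE; have h1 := ltn_ord v; have h2 := ltn_ord x.
apply/eqP/eqP => [|->]; last by rewrite leqnn subnn.
move=> h; apply/val_inj => /=; move: h; case: ifP; lia.
Qed.

Lemma P_vadd (v : 'I_n) k : k < n -> cdist v (vadd v k) = k.
Proof.
move=> hk; rewrite cdistE /vadd /= modn_lt2; have := ltn_ord v; try lia.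
do ! case: ifP; lia.
Qed.

Lemma vadd_P (v x : 'I_n) : vadd v (cdist v x) = x.
Proof.
apply/val_inj; rewrite /vadd /= cdistE modn_lt2; have := ltn_ord v; have := ltn_ord x;
 do ? case: ifP; lia.
Qed.

Lemma P_vsucc (v l : 'I_n) : 1 < n ->
  cdist v (vsucc l) = if cdist v l + 1 < n then cdist v l + 1 else 0.
Proof.
move=> hn; rewrite /vsucc !cdistE /vadd /= modn_lt2; have := ltn_ord v; have := ltn_ord l; try lia.
do ! case: ifP; lia.
Qed.

Lemma P_vpred (v l : 'I_n) : 1 < n ->
  cdist v (vpred l) = if cdist v l == 0 then n - 1 else cdist v l - 1.
Proof.
move=> hn; rewrite /vpred /vsub /vadd (modn_small (_ : 1 < n)) // !cdistE /= modn_lt2;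
  have := ltn_ord v; have := ltn_ord l; try lia.
do ! case: ifP; lia.
Qed.

Lemma P_vsub (v : 'I_n) k : k < n ->
  cdist v (vsub v k) = if k == 0 then 0 else n - k.
Proof.
move=> hk; rewrite /vsub /vadd (modn_small hk) !cdistE /= modn_lt2;
  have := ltn_ord v; try lia.
do ! case: ifP; lia.
Qed.

End Arith.


Section Card.
Variable n : nat.
Definition Iv (v : 'I_n) lo hi : {set 'I_n} := [set x | lo <= cdist v x <= hi].

Lemma card_Iv (v : 'I_n) lo hi : hi < n -> lo <= hi.+1 -> #|Iv v lo hi| = hi.+1 - lo.
Proof.
move=> hhi hlo.
have -> : Iv v lo hi = [set vadd v (lo + nat_of_ord i) | i : 'I_(hi.+1 - lo)].
  apply/setP => x; rewrite inE; apply/idP/imsetP.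
    move=> hx; have hi' : cdist v x - lo < hi.+1 - lo by lia.
    exists (Ordinal hi') => //=.
    have -> : lo + (cdist v x - lo) = cdist v x by lia.
    by rewrite vadd_P.
  case=> i _ ->; have := ltn_ord i; move=> ?; rewrite P_vadd; lia.
rewrite card_imset ?card_ord // => i j /(congr1 (cdist v)).
rewrite !P_vadd; have := ltn_ord i; have := ltn_ord j; try lia.
move=> *; apply/val_inj => /=; lia.
Qed.

Lemma card_sub_Iv (v : 'I_n) lo hi (h : {set 'I_n}) : hi < n -> lo <= hi.+1 ->
  (forall x, x \in h -> lo <= cdist v x <= hi) -> #|h| <= hi.+1 - lo.
Proof.
move=> hhi hlo hh; rewrite -(card_Iv v hhi hlo); apply: subset_leq_card.
by apply/subsetP => x /hh; rewrite inE.
Qed.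
End Card.
Lemma carc_posb n (v a c t : 'I_n) : (t \in carc a c) =
  ((cdist v a <= cdist v c) && (cdist v a <= cdist v t <= cdist v c)) ||
  ((cdist v c < cdist v a) && ((cdist v a <= cdist v t) || (cdist v t <= cdist v c))).
Proof.
apply/idP/idP => h.
  have := (carc_pos v a c t).1 h; lia.
apply/(carc_pos v a c t); lia.
Qed.



Ltac cl := repeat match goal with
 | h : M1_saturated _ _ |- _ => clear h
 | h : forall _, _ |- _ => clear h
 | h : is_true (_ \in _) |- _ => clear h
 | h : is_true (_ \notin _) |- _ => clear h
 | h : {set _} |- _ => clear h
 end.
Ltac Lia := cl; lia.

Section Main.
Variables (n r : nat) (H : {set {set 'I_n}}).
Hypotheses (hr : 2 <= r) (hn : 2 * r <= n) (hsat : M1_saturated r H).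

Definition sep (X Y : {set 'I_n}) : Prop :=
  exists u u', [/\ u != u', forall x, x \in X -> x \in carc u u'
                          & forall y, y \in Y -> y \notin carc u u'].

Lemma huni (h : {set 'I_n}) : h \in H -> #|h| = r.
Proof. by case: hsat => hu _; apply: hu. Qed.

Lemma noSep (h1 h2 : {set 'I_n}) : h1 \in H -> h2 \in H -> ~ sep h1 h2.
Proof.
move=> h1H h2H [u [u' [neq s1 s2]]]; case: hsat => _ [hno _]; apply: hno.
exists h1, h2, u, u'; split => //; first by apply/subsetP => x; apply: s1.
apply/setP => y; rewrite in_setI in_set0.
by case: (boolP (y \in h2)) => //= /s2 /negbTE.
Qed.

Lemma satSep (e : {set 'I_n}) : #|e| = r -> e \notin H -> exists2 h, h \in H & (sep e h \/ sep h e).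
Proof.
move=> ce eH; case: hsat => _ [hno hs]; case: (hs e ce eH) => h1 [h2 [u [u' [h1i h2i neq s1 s2]]]].
have S1 : forall x, x \in h1 -> x \in carc u u' by move=> x; apply/subsetP.
have S2 : forall y, y \in h2 -> y \notin carc u u'.
  move=> y yh; apply/negP => ya; have : y \in h2 :&: carc u u' by rewrite in_setI yh ya.
  by rewrite s2 in_set0.
move: h1i h2i; rewrite !in_setU1 => /orP[/eqP e1|h1H] /orP[/eqP e2|h2H].
- subst h1 h2; have : 0 < #|e| by lia.
  case/card_gt0P => x xe; have := S2 x xe; by rewrite S1.
- subst h1; exists h2 => //; left; by exists u, u'.
- subst h2; exists h1 => //; right; by exists u, u'.
- exfalso; apply: hno; exists h1, h2, u, u'; split => //; by apply/subsetP.
Qed.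

Lemma Pvv (v : 'I_n) : cdist v v = 0.
Proof. by rewrite cdistE leqnn subnn. Qed.

Lemma other (h : {set 'I_n}) (v : 'I_n) : h \in H -> exists2 x, x \in h & x != v.
Proof.
move=> hH; have c := huni hH.
have : ~~ (h \subset [set v]).
  by apply/negP => /subset_leq_card; rewrite cards1; lia.
by case/subsetPn => x xh; rewrite in_set1 => xv; exists x.
Qed.

Lemma Pne0 (v x : 'I_n) : x != v -> cdist v x != 0.
Proof. by rewrite P_eq0. Qed.

Lemma swap_sep (v : 'I_n) (h0 : {set 'I_n}) y : h0 \in H -> v \notin h0 -> y \in h0 ->
  v |: (h0 :\ y) \notin H ->
  exists2 h, h \in H & exists u u',
   ((forall x, x \in h -> x \notin carc u u') /\ v \in carc u u' /\
    (forall w, w \in h0 -> w != y -> w \in carc u u') /\ y \notin carc u u') \/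
   ((forall x, x \in h -> x \in carc u u') /\ v \notin carc u u' /\
    (forall w, w \in h0 -> w != y -> w \notin carc u u') /\ y \in carc u u').
Proof.
move=> h0H vh0 yh0 eH.
have ce : #|v |: (h0 :\ y)| = r.
  rewrite cardsU1 in_setD1 (negbTE vh0) andbF /=.
  have := huni h0H; rewrite (cardsD1 y) yh0 /= => ->; lia.
have inE1 w : w \in h0 -> w != y -> w \in v |: (h0 :\ y).
  by move=> wh wy; rewrite in_setU1 in_setD1 wy wh orbT.
have vE : v \in v |: (h0 :\ y) by rewrite setU11.
case: (satSep ce eH) => h hH [[u [u' [neq se sh]]]|[u [u' [neq sh se]]]]; exists h => //; exists u, u'.
- left; split => //; split; first exact: se.
  split; first by move=> w wh wy; apply: se; apply: inE1.
  apply/negP => yA; apply: (noSep h0H hH); exists u, u'; split => //.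
  move=> x xh; case: (eqVneq x y) => [->//|xy]; apply: se; exact: inE1.
- right; split => //; split; first exact: se.
  split; first by move=> w wh wy; apply: se; apply: inE1.
  apply/negPn/negP => yA; apply: (noSep hH h0H); exists u, u'; split => //.
  move=> x xh; case: (eqVneq x y) => [->//|xy]; apply: se; exact: inE1.
Qed.


Lemma Lcw (v : 'I_n) : forall k (h0 : {set 'I_n}), h0 \in H -> v \notin h0 ->
  (forall x, x \in h0 -> k <= cdist v x) ->
  exists2 e, e \in H & v \in e /\ (forall x, x \in e -> x != v -> k <= cdist v x).
Proof.
move=> k; move: {2}(n - k) (leqnn (n - k)) => m.
elim: m k => [|m IH] k hm h0 h0H vh0 hk.
  by case: (other v h0H) => x xh _; have := hk x xh; have := P_lt v x; Lia.
case: (other v h0H) => x0 x0h _.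
case: (@arg_maxnP _ x0 (fun x => x \in h0) (cdist v) x0h) => y yh0 ymax.
case: (boolP (v |: (h0 :\ y) \in H)) => eH.
  exists (v |: (h0 :\ y)) => //; split; first by rewrite setU11.
  move=> x; rewrite in_setU1 in_setD1 => /orP[/eqP->|/andP[_ xh]]; first by rewrite eqxx.
  by move=> _; apply: hk.
case: (swap_sep h0H vh0 yh0 eH) => h hH [u [u' hcase]].
case: (other y h0H) => w wh0 wy.
have Pwy : cdist v w < cdist v y.
  have : cdist v w <= cdist v y := ymax w wh0; rewrite leq_eqVlt => /orP[/eqP E|//].
  by move/P_inj: E => E; rewrite E eqxx in wy.
have key : v \notin h /\ forall x, x \in h -> cdist v w < cdist v x.
  have := P_lt v u; have := P_lt v u'; have := P_lt v w; have := P_lt v y => ? ? ? ?.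
  case: hcase => [[hx [vA [wA yA]]]|[hx [vA [wA yA]]]]; have wA' := wA w wh0 wy.
    split; first by apply/negP => vh; move: (hx v vh); rewrite vA.
    move=> x xh; have := hx x xh; have := P_lt v x; move: vA wA' yA.
    rewrite !(carc_posb v) Pvv; Lia.
  split; first by apply/negP => vh; move: (hx v vh); rewrite (negbTE vA).
  move=> x xh; have := hx x xh; have := P_lt v x; move: vA wA' yA.
  rewrite !(carc_posb v) Pvv; Lia.
case: key => vh hx.
have hk0 := hk w wh0.
case: (IH k.+1 _ h hH vh) => [|x xh|e eH' [ve he]]; first by Lia.
  by have := hx x xh; Lia.
exists e => //; split => // x xe xv; have := he x xe xv; Lia.
Qed.

Lemma Lccw (v : 'I_n) : forall k (h0 : {set 'I_n}), h0 \in H -> v \notin h0 ->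
  (forall x, x \in h0 -> cdist v x <= k) ->
  exists2 e, e \in H & v \in e /\ (forall x, x \in e -> cdist v x <= k).
Proof.
elim=> [|k IH] h0 h0H vh0 hk.
  by case: (other v h0H) => x xh xv; have := hk x xh; have := Pne0 xv; Lia.
case: (other v h0H) => x0 x0h _.
case: (@arg_minnP _ x0 (fun x => x \in h0) (cdist v) x0h) => y yh0 ymin.
case: (boolP (v |: (h0 :\ y) \in H)) => eH.
  exists (v |: (h0 :\ y)) => //; split; first by rewrite setU11.
  move=> x; rewrite in_setU1 in_setD1 => /orP[/eqP->|/andP[_ xh]]; first by rewrite Pvv.
  by apply: hk.
case: (swap_sep h0H vh0 yh0 eH) => h hH [u [u' hcase]].
case: (other y h0H) => w wh0 wy.
have Pwy : cdist v y < cdist v w.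
  have : cdist v y <= cdist v w := ymin w wh0; rewrite leq_eqVlt => /orP[/eqP E|//].
  by move/P_inj: E => E; rewrite E eqxx in wy.
have key : v \notin h /\ forall x, x \in h -> cdist v x < cdist v w.
  have := P_lt v u; have := P_lt v u'; have := P_lt v w; have := P_lt v y => ? ? ? ?.
  case: hcase => [[hx [vA [wA yA]]]|[hx [vA [wA yA]]]]; have wA' := wA w wh0 wy.
    split; first by apply/negP => vh; move: (hx v vh); rewrite vA.
    move=> x xh; have := hx x xh; have := P_lt v x; move: vA wA' yA.
    rewrite !(carc_posb v) Pvv; Lia.
  split; first by apply/negP => vh; move: (hx v vh); rewrite (negbTE vA).
  move=> x xh; have := hx x xh; have := P_lt v x; move: vA wA' yA.
  rewrite !(carc_posb v) Pvv; Lia.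
case: key => vh hx.
have hk0 := hk w wh0.
case: (IH h hH vh) => [x xh|e eH' [ve he]].
  by have := hx x xh; Lia.
exists e => //; split => // x xe; have := he x xe; Lia.
Qed.


Lemma hn1 : 1 < n. Proof. lia. Qed.

Lemma memIv (v x : 'I_n) lo hi :
  (x \in v |: Iv v lo hi) = (cdist v x == 0) || (lo <= cdist v x <= hi).
Proof. by rewrite in_setU1 /Iv inE P_eq0. Qed.

Lemma cardIvU (v : 'I_n) lo hi : 0 < lo -> hi < n -> lo <= hi.+1 ->
  #|v |: Iv v lo hi| = (hi.+1 - lo).+1.
Proof.
move=> h1 h2 h3; rewrite cardsU1 card_Iv // /Iv inE Pvv.
by case: lo h1 {h3} => // lo _; rewrite ltn0 /= add1n.
Qed.

Lemma cover (v : 'I_n) : exists2 h, h \in H & v \in h.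
Proof.
have cg : #|v |: Iv v 1 (r - 1)| = r by rewrite cardIvU; Lia.
case: (boolP (v |: Iv v 1 (r - 1) \in H)) => gH; first by exists (v |: Iv v 1 (r - 1)); rewrite ?setU11.
case: (satSep cg gH) => h hH _.
case: (boolP (v \in h)) => vh; first by exists h.
by case: (Lcw (k := 0) hH vh) => // e eH [ve _]; exists e.
Qed.

Lemma in_carc_r (a b : 'I_n) : b \in carc a b.
Proof. by rewrite inE leqnn. Qed.

Lemma lam_ex (v : 'I_n) : exists l, is_lambda H v l.
Proof.
pose Q k := [exists h : {set 'I_n}, (h \in H) && (v \in h) &&
              [forall x, (x \in h) && (x != v) ==> (k <= cdist v x)]].
have Q1 : Q 1.
  case: (cover v) => h hH vh; apply/existsP; exists h; rewrite hH vh /=.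
  by apply/forallP => x; apply/implyP => /andP[_ /Pne0]; Lia.
have ex : exists k, Q k by exists 1.
have ub : forall k, Q k -> k <= n.
  move=> k /existsP[h /andP[/andP[hH _] /forallP hf]].
  case: (other v hH) => x xh xv; have := implyP (hf x) (introT andP (conj xh xv)).
  have := P_lt v x; Lia.
case: (ex_maxnP ex ub) => k /existsP[h /andP[/andP[hH vh] /forallP hf]] kmax.
have hfx x : x \in h -> x != v -> k <= cdist v x.
  by move=> xh xv; apply: (implyP (hf x)); rewrite xh xv.
have k1 : 1 <= k by apply: kmax Q1.
have kn : k < n by case: (other v hH) => x xh xv; have := hfx x xh xv; have := P_lt v x; Lia.
exists (vadd v k); split.
  exists h => //; rewrite vh /=; apply/subsetP => x xh.
  rewrite (carc_posb v) Pvv P_vadd //.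
  case: (eqVneq x v) => [->|xv]; first by rewrite Pvv; Lia.
  by have := hfx x xh xv; Lia.
case=> h' h'H /andP[vh' sub].
suff : Q k.+1 by move/kmax; rewrite ltnn.
apply/existsP; exists h'; rewrite h'H vh' /=; apply/forallP => x; apply/implyP => /andP[xh xv].
have := subsetP sub x xh; rewrite (carc_posb v) Pvv P_vsucc ?hn1 // P_vadd //.
have := Pne0 xv; have := P_lt v x; case: ifP => ? ? ?; Lia.
Qed.

Lemma rho_ex (v : 'I_n) : exists p, is_rho H v p.
Proof.
pose Q k := [exists h : {set 'I_n}, (h \in H) && (v \in h) &&
              [forall x, (x \in h) ==> (cdist v x <= k)]].
have Qn : Q (n - 1).
  case: (cover v) => h hH vh; apply/existsP; exists h; rewrite hH vh /=.
  by apply/forallP => x; apply/implyP => _; have := P_lt v x; Lia.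
have ex : exists k, Q k by exists (n - 1).
case: (ex_minnP ex) => k /existsP[h /andP[/andP[hH vh] /forallP hf]] kmin.
have hfx x : x \in h -> cdist v x <= k by move=> xh; apply: (implyP (hf x)).
have k1 : 1 <= k by case: (other v hH) => x xh xv; have := hfx x xh; have := Pne0 xv; Lia.
have kn : k < n by have := kmin _ Qn; Lia.
exists (vadd v k); split.
  exists h => //; rewrite vh /=; apply/subsetP => x xh.
  by rewrite (carc_posb v) Pvv P_vadd //; have := hfx x xh; Lia.
case=> h' h'H /andP[vh' sub].
suff : Q k.-1 by move/kmin; Lia.
apply/existsP; exists h'; rewrite h'H vh' /=; apply/forallP => x; apply/implyP => xh.
have := subsetP sub x xh; rewrite (carc_posb v) Pvv P_vpred ?hn1 // P_vadd //.
have := P_lt v x; case: ifP => ? ?; Lia.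
Qed.


Lemma lamP (v l : 'I_n) : is_lambda H v l ->
  [/\ 0 < cdist v l,
      exists2 h1, h1 \in H & v \in h1 /\ (forall x, x \in h1 -> x != v -> cdist v l <= cdist v x) &
      forall h, h \in H -> exists2 x, x \in h & x != v /\ cdist v x <= cdist v l].
Proof.
case=> [[h1 h1H /andP[vh1 sub]] nomin].
have pos x : x \in h1 -> x != v -> 0 < cdist v l <= cdist v x.
  move=> xh xv; have := subsetP sub x xh; rewrite (carc_posb v) Pvv.
  have := Pne0 xv; Lia.
have l0 : 0 < cdist v l by case: (other v h1H) => x xh xv; have := pos x xh xv; Lia.
have hb : forall h, h \in H -> v \in h -> exists2 x, x \in h & x != v /\ cdist v x <= cdist v l.
  move=> h hH vh.
  case: (boolP [exists x, (x \in h) && ((x != v) && (cdist v x <= cdist v l))]).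
    by case/existsP => x /andP[xh /andP[xv xle]]; exists x.
  move/existsPn => hn'; exfalso; apply: nomin; exists h => //; rewrite vh /=.
  apply/subsetP => x xh; case: (eqVneq x v) => [->|xv]; first exact: in_carc_r.
  have := hn' x; rewrite xh xv /=.
  rewrite (carc_posb v) Pvv P_vsucc ?hn1 //; have := P_lt v x; have := P_lt v l.
  case: ifP => ? ? ? ?; Lia.
split => //; first by exists h1 => //; split => // x xh xv; have := pos x xh xv; Lia.
move=> h hH; case: (boolP (v \in h)) => vh; first exact: hb.
case: (boolP [exists x, (x \in h) && (cdist v x <= cdist v l)]).
  case/existsP => x /andP[xh xle]; exists x => //; split => //.
  by apply/negP => /eqP xv; rewrite -xv xh in vh.
move/existsPn => hn'; exfalso.
case: (Lcw (k := (cdist v l).+1) hH vh) => [x xh|e eH [ve he]].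
  by have := hn' x; rewrite xh /=; Lia.
case: (hb e eH ve) => x xe [xv xle]; have := he x xe xv; Lia.
Qed.

Lemma rhoP (v p : 'I_n) : is_rho H v p ->
  [/\ 0 < cdist v p,
      exists2 h2, h2 \in H & v \in h2 /\ (forall x, x \in h2 -> cdist v x <= cdist v p) &
      forall h, h \in H -> exists2 x, x \in h & cdist v p <= cdist v x].
Proof.
case=> [[h2 h2H /andP[vh2 sub]] nomin].
have pos x : x \in h2 -> cdist v x <= cdist v p.
  move=> xh; have := subsetP sub x xh; rewrite (carc_posb v) Pvv; Lia.
have p0 : 0 < cdist v p by case: (other v h2H) => x xh xv; have := pos x xh; have := Pne0 xv; Lia.
have hb : forall h, h \in H -> v \in h -> exists2 x, x \in h & cdist v p <= cdist v x.
  move=> h hH vh.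
  case: (boolP [exists x, (x \in h) && (cdist v p <= cdist v x)]).
    by case/existsP => x /andP[xh xle]; exists x.
  move/existsPn => hn'; exfalso; apply: nomin; exists h => //; rewrite vh /=.
  apply/subsetP => x xh; have := hn' x; rewrite xh /=.
  rewrite (carc_posb v) Pvv P_vpred ?hn1 //; have := P_lt v x; have := P_lt v p.
  case: ifP => ? ? ? ?; Lia.
split => //; first by exists h2.
move=> h hH; case: (boolP (v \in h)) => vh; first exact: hb.
case: (boolP [exists x, (x \in h) && (cdist v p <= cdist v x)]).
  by case/existsP => x /andP[xh xle]; exists x.
move/existsPn => hn'; exfalso.
case: (Lccw (k := (cdist v p).-1) hH vh) => [x xh|e eH [ve he]].
  by have := hn' x; rewrite xh /=; Lia.
case: (hb e eH ve) => x xe xle; have := he x xe; Lia.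
Qed.


Lemma claimA (v : 'I_n) : exists2 g, g \in H & v \in g /\ forall x, x \in g -> x != v -> r <= cdist v x.
Proof.
have cg : #|v |: Iv v r (2 * r - 2)| = r by rewrite cardIvU; Lia.
case: (boolP (v |: Iv v r (2 * r - 2) \in H)) => gH.
  exists (v |: Iv v r (2 * r - 2)) => //; split; first by rewrite setU11.
  by move=> x; rewrite memIv => xg /Pne0; move: xg; Lia.
case: (satSep cg gH) => h hH hs.
have qg : vadd v r \in v |: Iv v r (2 * r - 2) by rewrite memIv P_vadd; Lia.
have vg : v \in v |: Iv v r (2 * r - 2) by rewrite setU11.
case: (boolP [forall x, (x \in h) ==> (2 * r - 1 <= cdist v x)]).
  move/forallP => hall.
  have hx x : x \in h -> 2 * r - 1 <= cdist v x by move=> xh; apply: (implyP (hall x)).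
  have vh : v \notin h by apply/negP => /hx; rewrite Pvv; Lia.
  case: (Lcw hH vh hx) => e eH [ve he]; exists e => //; split => // x xe xv.
  by have := he x xe xv; Lia.
case/forallPn => t; rewrite negb_imply => /andP[th tlt]; exfalso.
suff : forall x, x \in h -> 1 <= cdist v x <= r - 1.
  move/(card_sub_Iv (lo := 1) (hi := r - 1)); rewrite huni //; Lia.
have := P_lt v (vadd v r); have := P_lt v t.
case: hs => [[u [u' [neq sg sh]]]|[u [u' [neq sh sg]]]] => ? ?.
  have xg x : x \in h -> x \notin v |: Iv v r (2 * r - 2).
    by move=> xh; apply/negP => /sg; rewrite (negbTE (sh x xh)).
  move=> x xh; have := sh x xh; have := sh t th; have := xg x xh; have := xg t th.
  have := sg _ vg; have := sg _ qg; have := P_lt v x; have := P_lt v u; have := P_lt v u'.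
  move: tlt; rewrite !memIv !(carc_posb v) Pvv P_vadd; Lia.
have xg x : x \in h -> x \notin v |: Iv v r (2 * r - 2).
  by move=> xh; apply/negP => /sg; rewrite (sh x xh).
move=> x xh; have := sh x xh; have := sh t th; have := xg x xh; have := xg t th.
have := sg _ vg; have := sg _ qg; have := P_lt v x; have := P_lt v u; have := P_lt v u'.
move: tlt; rewrite !memIv !(carc_posb v) Pvv P_vadd; Lia.
Qed.

Lemma claimB (v : 'I_n) : exists2 g, g \in H & v \in g /\ forall x, x \in g -> cdist v x <= n - r.
Proof.
have cg : #|v |: Iv v (n - 2 * r + 2) (n - r)| = r by rewrite cardIvU; Lia.
case: (boolP (v |: Iv v (n - 2 * r + 2) (n - r) \in H)) => gH.
  exists (v |: Iv v (n - 2 * r + 2) (n - r)) => //; split; first by rewrite setU11.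
  by move=> x; rewrite memIv; Lia.
case: (satSep cg gH) => h hH hs.
have qg : vadd v (n - r) \in v |: Iv v (n - 2 * r + 2) (n - r) by rewrite memIv P_vadd; Lia.
have vg : v \in v |: Iv v (n - 2 * r + 2) (n - r) by rewrite setU11.
have vh : v \notin h.
  apply/negP => vh; case: hs => [[u [u' [neq sg sh]]]|[u [u' [neq sh sg]]]].
    by have := sh v vh; rewrite sg.
  by have := sg v vg; rewrite sh.
case: (boolP [forall x, (x \in h) ==> (cdist v x <= n - 2 * r + 1)]).
  move/forallP => hall.
  have hx x : x \in h -> cdist v x <= n - 2 * r + 1 by move=> xh; apply: (implyP (hall x)).
  case: (Lccw hH vh hx) => e eH [ve he]; exists e => //; split => // x xe.
  by have := he x xe; Lia.
case/forallPn => t; rewrite negb_imply => /andP[th tlt]; exfalso.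
suff : forall x, x \in h -> n - r + 1 <= cdist v x <= n - 1.
  move/(card_sub_Iv (lo := n - r + 1) (hi := n - 1)); rewrite huni //; Lia.
have := P_lt v (vadd v (n - r)); have := P_lt v t.
case: hs => [[u [u' [neq sg sh]]]|[u [u' [neq sh sg]]]] => ? ?.
  have xg x : x \in h -> x \notin v |: Iv v (n - 2 * r + 2) (n - r).
    by move=> xh; apply/negP => /sg; rewrite (negbTE (sh x xh)).
  move=> x xh; have := sh x xh; have := sh t th; have := xg x xh; have := xg t th.
  have := sg _ vg; have := sg _ qg; have := P_lt v x; have := P_lt v u; have := P_lt v u'.
  move: tlt; rewrite !memIv !(carc_posb v) Pvv P_vadd; Lia.
have xg x : x \in h -> x \notin v |: Iv v (n - 2 * r + 2) (n - r).
  by move=> xh; apply/negP => /sg; rewrite (sh x xh).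
move=> x xh; have := sh x xh; have := sh t th; have := xg x xh; have := xg t th.
have := sg _ vg; have := sg _ qg; have := P_lt v x; have := P_lt v u; have := P_lt v u'.
move: tlt; rewrite !memIv !(carc_posb v) Pvv P_vadd; Lia.
Qed.


Lemma lam_bnd (v l : 'I_n) : is_lambda H v l -> r <= cdist v l <= n - r + 1.
Proof.
move=> hl; case: (lamP hl) => l0 [h1 h1H [vh1 hh1]] hall.
have lo : r <= cdist v l.
  case: (claimA v) => g gH [vg hg]; case: (hall g gH) => x xg [xv xle].
  by have := hg x xg xv; Lia.
have c1 : #|h1 :\ v| = r - 1 by have := cardsD1 v h1; rewrite vh1 (huni h1H) add1n => ->; rewrite subn1.
have := P_lt v l.
have := card_sub_Iv (v := v) (lo := cdist v l) (hi := n - 1) (h := h1 :\ v).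
rewrite c1 => hc ?.
have hc' : forall x, x \in h1 :\ v -> cdist v l <= cdist v x <= n - 1.
  move=> x; rewrite in_setD1 => /andP[xv xh]; have := hh1 x xh xv; have := P_lt v x; Lia.
have := hc ltac:(Lia) ltac:(Lia) hc'; Lia.
Qed.

Lemma rho_bnd (v p : 'I_n) : is_rho H v p -> r - 1 <= cdist v p <= n - r.
Proof.
move=> hp; case: (rhoP hp) => p0 [h2 h2H [vh2 hh2]] hall.
have hi : cdist v p <= n - r.
  case: (claimB v) => g gH [vg hg]; case: (hall g gH) => x xg xle.
  by have := hg x xg; Lia.
have := card_sub_Iv (v := v) (lo := 0) (hi := cdist v p) (h := h2).
rewrite huni // => hc; have := P_lt v p => ?.
have := hc ltac:(Lia) ltac:(Lia); move/(_ hh2) => ?; Lia.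
Qed.

Lemma part3 (v l p : 'I_n) : is_lambda H v l -> is_rho H v p -> cdist v p <= cdist v l.
Proof.
move=> hl hp; case: (leqP (cdist v p) (cdist v l)) => // hlt; exfalso.
have bl := lam_bnd hl; have bp := rho_bnd hp.
case: (lamP hl) => l0 _ halll; case: (rhoP hp) => p0 _ hallp.
pose g := v |: Iv v (cdist v l).+1 (cdist v l + r - 1).
have cg : #|g| = r by rewrite cardIvU; Lia.
have gH : g \notin H.
  apply/negP => gH; case: (halll g gH) => x xg [xv xle].
  by move: xg; rewrite memIv; have := Pne0 xv; Lia.
case: (satSep cg gH) => h hH hs.
case: (halll h hH) => x1 x1h [x1v x1le]; case: (hallp h hH) => x2 x2h x2le.
have qg : vadd v (cdist v l).+1 \in g by rewrite memIv P_vadd; Lia.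
have vg : v \in g by rewrite setU11.
have := Pne0 x1v; have := P_lt v x1; have := P_lt v x2; have := P_lt v l => ? ? ? ?.
case: hs => [[u [u' [neq sg sh]]]|[u [u' [neq sh sg]]]].
  have := sh x1 x1h; have := sh x2 x2h; have := sg _ vg; have := sg _ qg.
  have := P_lt v u; have := P_lt v u'.
  rewrite !(carc_posb v) Pvv P_vadd; Lia.
have := sh x1 x1h; have := sh x2 x2h; have := sg _ vg; have := sg _ qg.
have := P_lt v u; have := P_lt v u'.
rewrite !(carc_posb v) Pvv P_vadd; Lia.
Qed.


Lemma main_sec :
  (forall v : 'I_n, exists2 h, h \in H & v \in h) /\
  (forall v : 'I_n, (exists u, is_lambda H v u) /\ (exists u, is_rho H v u)) /\
  (forall v l : 'I_n, is_lambda H v l ->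
     l \notin carc (vsub v (r - 2)) (vadd v (r - 1))) /\
  (forall v p : 'I_n, is_rho H v p ->
     p \notin carc (vsub v (r - 1)) (vadd v (r - 2))) /\
  (forall v l p : 'I_n, is_lambda H v l -> is_rho H v p ->
     [/\ p != v, l != v & p \in ocarc v l]) /\
  (forall v l p w : 'I_n, is_lambda H v l -> is_rho H v p ->
     w \in carc p l ->
     forall e : {set 'I_n}, #|e| = r -> v \in e -> w \in e -> e \in H).
Proof.
split; first exact: cover.
split; first by move=> v; split; [apply: lam_ex | apply: rho_ex].
split.
  move=> v l hl; have := lam_bnd hl.
  rewrite (carc_posb v) P_vsub ?P_vadd; try Lia.
  case: eqP => ?; Lia.
split.
  move=> v p hp; have := rho_bnd hp.
  rewrite (carc_posb v) P_vsub ?P_vadd; try Lia.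
  case: eqP => ?; Lia.
split.
  move=> v l p hl hp; have := part3 hl hp.
  case: (lamP hl) => l0 _ _; case: (rhoP hp) => p0 _ _.
  split; last by rewrite inE; Lia.
    by apply/eqP => E; move: p0; rewrite E Pvv.
  by apply/eqP => E; move: l0; rewrite E Pvv.
move=> v l p w hl hp wA e ce ve we.
case: (boolP (e \in H)) => // eH; exfalso.
have p3 := part3 hl hp.
case: (lamP hl) => l0 [h1 h1H [vh1 hh1]] _; case: (rhoP hp) => p0 [h2 h2H [vh2 hh2]] _.
have := P_lt v w; have := P_lt v l; have := P_lt v p => ? ? ?.
move: wA; rewrite (carc_posb v) => wA.
case: (satSep ce eH) => h hH [[u [u' [neq se sh]]]|[u [u' [neq sh se]]]].
  have vA := se v ve; have wA' := se w we.
  have := P_lt v u; have := P_lt v u' => ? ?.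
  move: (vA) (wA'); rewrite !(carc_posb v) Pvv => vA1 wA1.
  have [c1|c2] : cdist v p <= cdist v u' /\ (cdist v u <= cdist v u' -> cdist v u = 0) \/
          cdist v u' < cdist v u /\ cdist v u <= cdist v l by Lia.
    apply: (noSep h2H hH); exists u, u'; split => // x xh.
    by have := hh2 x xh; have := P_lt v x; rewrite (carc_posb v); Lia.
  apply: (noSep h1H hH); exists u, u'; split => // x xh.
  case: (eqVneq x v) => [->//|xv].
  by have := hh1 x xh xv; have := P_lt v x; rewrite (carc_posb v); Lia.
have vA := se v ve; have wA' := se w we.
have := P_lt v u; have := P_lt v u' => ? ?.
move: (vA) (wA'); rewrite !(carc_posb v) Pvv => vA1 wA1.
have [c1|c2] : cdist v u' < cdist v w /\ cdist v u <= cdist v u' \/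
         cdist v w < cdist v u /\ cdist v u <= cdist v u' by Lia.
  apply: (noSep hH h1H); exists u, u'; split => // x xh.
  case: (eqVneq x v) => [->//|xv].
  by have := hh1 x xh xv; have := P_lt v x; rewrite (carc_posb v); Lia.
apply: (noSep hH h2H); exists u, u'; split => // x xh.
by have := hh2 x xh; have := P_lt v x; rewrite (carc_posb v); Lia.
Qed.

End Main.

Theorem proposition3p4 (r n : nat) (H : {set {set 'I_n}}) :
  2 <= r -> 2 * r <= n -> M1_saturated r H ->
  (forall v : 'I_n, exists2 h, h \in H & v \in h) /\
  (forall v : 'I_n, (exists u, is_lambda H v u) /\ (exists u, is_rho H v u)) /\
  (forall v l : 'I_n, is_lambda H v l ->
     l \notin carc (vsub v (r - 2)) (vadd v (r - 1))) /\
  (forall v p : 'I_n, is_rho H v p ->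
     p \notin carc (vsub v (r - 1)) (vadd v (r - 2))) /\
  (forall v l p : 'I_n, is_lambda H v l -> is_rho H v p ->
     [/\ p != v, l != v & p \in ocarc v l]) /\
  (forall v l p w : 'I_n, is_lambda H v l -> is_rho H v p ->
     w \in carc p l ->
     forall e : {set 'I_n}, #|e| = r -> v \in e -> w \in e -> e \in H).
Proof. move=> hr hn hs; exact: (main_sec hr hn hs). Qed.
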